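(* For every non-empty well-quasi-order $Q$, $o(\mathsf{T_f}(Q))>o(Q)$.
   Context: A well-quasi-order is a quasi-order in which every infinite sequence $(x_i)_{i<\omega}$ has $i<j$ with $x_i\le x_j$. For a wqo $P$, $o(P)$ is the supremum of the order types of linearizations of $P$, i.e. linear quasi-orders on the same set extending its order. Trees: $\mathsf{T_f}(Q)$ is the smallest class containing the leaf $\cdot q$ for each $q\in Q$, and containing $\cdot(\tau_0,\dots,\tau_{k-1})$ (an unlabelled root whose children are the $\tau_i$) for every finite set $\{\tau_0,\dots,\tau_{k-1}\}\subseteq\mathsf{T_f}(Q)$ with $k\ge1$. Its order $\le_T$ is defined recursively: - $\cdot x\le_T\cdot y$ iff $x\le_Q y$; - $\cdot x\le_T\cdot(\tau_j)_{j<l}$ iff $\cdot x\le_T\tau_j$ for some $j$; - $\cdot(\sigma_i)_{i<k}\le_T\cdot(\tau_j)_{j<l}$ iff every $\sigma_i$ is $\le_T$ some $\tau_j$; - a non-leaf tree is never $\le_T$ a leaf. *)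

(* Defs.v *)
From Stdlib Require Import List.
Import ListNotations.

Definition quasi_order {X : Type} (le : X -> X -> Prop) : Prop :=
  (forall x, le x x) /\ (forall x y z, le x y -> le y z -> le x z).

Definition wqo {X : Type} (le : X -> X -> Prop) : Prop :=
  quasi_order le /\
  forall f : nat -> X, exists i j, i < j /\ le (f i) (f j).

Definition strict {X : Type} (le : X -> X -> Prop) (x y : X) : Prop :=
  le x y /\ ~ le y x.

Definition linearization {X : Type} (le L : X -> X -> Prop) : Prop :=
  quasi_order L /\ (forall x y, L x y \/ L y x) /\
  (forall x y, le x y -> L x y).

(** Comparison of maximal order types without an ordinal datatype.
    For wqos P (on X) and P' (on Y), [o_lt P P'] expresses o(P) < o(P'),
    where o(P) = sup { type(L) | L linearization of P }.
    Indeed o(P) < o(P') iff there is an ordinal beta < o(P') with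
    type(M) <= beta for every linearization M of P; the ordinals
    beta < o(P') are exactly the order types of the proper initial
    segments {y | y <_L a} of linearizations L of P'; and for well-ordered
    (linear quasi-)orders, type(M) <= type(S) iff there is a map that is
    strictly increasing w.r.t. the strict parts. *)
Definition o_lt {X Y : Type} (P : X -> X -> Prop) (P' : Y -> Y -> Prop)
  : Prop :=
  exists (L : Y -> Y -> Prop) (a : Y),
    linearization P' L /\
    forall M : X -> X -> Prop, linearization P M ->
      exists f : X -> Y,
        (forall x y, strict M x y -> strict L (f x) (f y)) /\
        (forall x, strict L (f x) a).

(** Finite trees T_f(Q): leaves labelled in Q, internal nodes unlabelled
    with a finite non-empty collection of children (here a non-empty list
    [t :: ts]; the order below only depends on membership, so duplicates
    and permutations yield <=_T-equivalent trees). *)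
Inductive tree (Q : Type) : Type :=
| Leaf : Q -> tree Q
| Node : tree Q -> list (tree Q) -> tree Q.

Arguments Leaf {Q} _.
Arguments Node {Q} _ _.

Inductive tle {Q : Type} (qle : Q -> Q -> Prop) : tree Q -> tree Q -> Prop :=
| tle_leaf_leaf : forall x y, qle x y -> tle qle (Leaf x) (Leaf y)
| tle_leaf_node : forall x t ts u,
    In u (t :: ts) -> tle qle (Leaf x) u -> tle qle (Leaf x) (Node t ts)
| tle_node_node : forall s ss t ts,
    (forall sg, In sg (s :: ss) ->
       exists tau, In tau (t :: ts) /\ tle qle sg tau) ->
    tle qle (Node s ss) (Node t ts).

(* Main.v *)
Require Import Defs.
From Stdlib Require Import List Classical ClassicalEpsilon Lia Sorted.
Import ListNotations.
From mathcomp Require boolp wochoice.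

Module WO.
Import ssreflect ssrfun ssrbool eqtype boolp wochoice.
Lemma wo_min (Q : Type) : exists R : Q -> Q -> Prop,
  forall P : Q -> Prop, (exists x, P x) -> exists m, P m /\ (forall y, P y -> R m y) /\
     (forall m', P m' -> (forall y, P y -> R m' y) -> m' = m).
Proof.
have [R HR] := well_ordering_principle {classic Q}.
exists (fun x y : Q => R x y = true).
move=> P [x Px].
have ne : nonempty [pred z : {classic Q} | `[< P z >] ].
  by exists x; rewrite inE; apply/asboolP.
have [m [[Pm lb] Hu]] := HR _ ne.
exists m; split; first by move: Pm; rewrite inE => /asboolP.
split; first by move=> y Py; apply: lb; rewrite inE; apply/asboolP.
move=> m' Pm' lb'; symmetry; apply: Hu; split; first by rewrite inE; apply/asboolP.
by move=> y; rewrite inE => /asboolP; apply: lb'.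
Qed.
End WO.

Lemma not_acc_chain {T} (R : T -> T -> Prop) x : ~ Acc R x ->
  exists f : nat -> T, f 0 = x /\ forall n, R (f (S n)) (f n).
Proof.
  intro H.
  assert (step : forall y : {y | ~ Acc R y}, {z : {z | ~ Acc R z} | R (proj1_sig z) (proj1_sig y)}).
  { intros [y Hy]. apply constructive_indefinite_description.
    apply NNPP; intro C. apply Hy. constructor. intros z Rz.
    apply NNPP; intro Hz. apply C. exists (exist _ z Hz). exact Rz. }
  pose (g := fix g n := match n with 0 => exist (fun y => ~ Acc R y) x H | S n => proj1_sig (step (g n)) end).
  exists (fun n => proj1_sig (g n)). split. reflexivity.
  intro n. simpl. exact (proj2_sig (step (g n))).
Qed.

Section Ranks.
Context {Q : Type} (qle : Q -> Q -> Prop).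
Hypothesis qrefl : forall x, qle x x.
Hypothesis qtrans : forall x y z, qle x y -> qle y z -> qle x z.
Hypothesis qwqo : forall f : nat -> Q, exists i j, i < j /\ qle (f i) (f j).

Definition slt x y := qle x y /\ ~ qle y x.

Lemma slt_trans x y z : slt x y -> slt y z -> slt x z.
Proof. intros [H1 H2] [H3 H4]. split. eauto. intro H. apply H4. eauto. Qed.

Lemma slt_wf : forall x, Acc slt x.
Proof.
  intro x. apply NNPP. intro H. destruct (not_acc_chain slt x H) as [f [_ Hf]].
  assert (Hc : forall i k, slt (f (S k + i)) (f i)).
  { intros i k. induction k as [|k IH]. simpl. apply Hf.
    apply slt_trans with (f (S k + i)). replace (S (S k) + i) with (S (S k + i)) by lia. apply Hf. exact IH. }
  destruct (qwqo f) as [i [j [Hij Hq]]].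
  destruct (Hc i (j - S i)) as [_ Hn]. replace (S (j - S i) + i) with j in Hn by lia. contradiction.
Qed.

Inductive rle : Q -> Q -> Prop :=
 rle_i : forall x y, (forall x', slt x' x -> exists y', slt y' y /\ rle x' y') -> rle x y.

Definition rlt x y := exists y', slt y' y /\ rle x y'.

Lemma rle_inv x y : rle x y -> forall x', slt x' x -> exists y', slt y' y /\ rle x' y'.
Proof. intros H. destruct H. assumption. Qed.

Lemma rle_refl : forall x, rle x x.
Proof.
  intro x. induction (slt_wf x) as [x _ IH]. constructor. intros x' H. exists x'. split; auto.
Qed.

Lemma rle_trans : forall x y z, rle x y -> rle y z -> rle x z.
Proof.
  intro x. induction (slt_wf x) as [x _ IH]. intros y z Hxy Hyz. constructor.
  intros x' Hx'. destruct (rle_inv _ _ Hxy x' Hx') as [y' [Hy' Hr]].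
  destruct (rle_inv _ _ Hyz y' Hy') as [z' [Hz' Hr']]. exists z'. split; eauto.
Qed.

Lemma rlt_rle x y : rlt x y -> rle x y.
Proof.
  intros [y' [Hy' Hr]]. constructor. intros x' Hx'.
  destruct (rle_inv _ _ Hr x' Hx') as [y'' [H1 H2]]. exists y''. split; eauto using slt_trans.
Qed.

Lemma slt_rlt x y : slt x y -> rlt x y.
Proof. intro H. exists x. split; auto using rle_refl. Qed.

Lemma rle_total : forall x y, rle x y \/ rlt y x.
Proof.
  intro x. induction (slt_wf x) as [x _ IH]. intro y.
  destruct (classic (rle x y)) as [H|H]. left; exact H. right.
  assert (exists x', slt x' x /\ forall y', slt y' y -> ~ rle x' y') as [x' [Hx' Hn]].
  { apply NNPP. intro C. apply H. constructor. intros x' Hx'. apply NNPP. intro C2.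
    apply C. exists x'. split. exact Hx'. intros y' Hy' Hr. apply C2. exists y'. auto. }
  exists x'. split. exact Hx'. constructor. intros y' Hy'.
  destruct (IH x' Hx' y') as [Hr|Hr]. exfalso; exact (Hn y' Hy' Hr). exact Hr.
Qed.

Lemma rlt_irrefl : forall x, ~ rlt x x.
Proof.
  intro x. induction (slt_wf x) as [x _ IH]. intros [x' [Hx' Hr]].
  destruct (rle_inv _ _ Hr x' Hx') as [x'' [H1 H2]]. apply (IH x' Hx'). exists x''. auto.
Qed.

Lemma rlt_rle_trans x y z : rlt x y -> rle y z -> rlt x z.
Proof.
  intros [y' [Hy' Hr]] Hyz. destruct (rle_inv _ _ Hyz y' Hy') as [z' [H1 H2]].
  exists z'. split. auto. eauto using rle_trans.
Qed.

Lemma rle_rlt_trans x y z : rle x y -> rlt y z -> rlt x z.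
Proof. intros H [z' [H1 H2]]. exists z'. split. auto. eauto using rle_trans. Qed.

Lemma rlt_not_rle x y : rlt x y -> ~ rle y x.
Proof. intros H1 H2. apply (rlt_irrefl x). eapply rlt_rle_trans; eauto. Qed.

Lemma rlt_wf_aux : forall x y, rle y x -> Acc rlt y.
Proof.
  intro x. induction (slt_wf x) as [x _ IH]. intros y Hyx. constructor. intros z [y' [Hy' Hz]].
  destruct (rle_inv _ _ Hyx y' Hy') as [x' [H1 H2]]. apply (IH x' H1). eauto using rle_trans.
Qed.

Lemma rlt_wf : forall x, Acc rlt x.
Proof. intro x. apply (rlt_wf_aux x). apply rle_refl. Qed.

Lemma wf_min {T} (R : T -> T -> Prop) (wf : forall x, Acc R x) (P : T -> Prop) :
  (exists x, P x) -> exists m, P m /\ forall y, P y -> ~ R y m.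
Proof.
  intros [x Px]. induction (wf x) as [x _ IH].
  destruct (classic (exists y, P y /\ R y x)) as [[y [Py Ry]]|H].
  apply (IH y Ry Py). exists x. split. auto. intros y Py Ry. apply H. eauto.
Qed.

Variable R : Q -> Q -> Prop.
Hypothesis HR : forall P : Q -> Prop, (exists x, P x) -> exists m, P m /\ (forall y, P y -> R m y) /\
     (forall m', P m' -> (forall y, P y -> R m' y) -> m' = m).

Lemma R_refl x : R x x.
Proof. destruct (HR (fun z => z = x)) as [m [Hm [H _]]]. eauto. subst. apply H. auto. Qed.

Lemma R_total x y : R x y \/ R y x.
Proof.
  destruct (HR (fun z => z = x \/ z = y)) as [m [Hm [H _]]]. eauto.
  destruct Hm; subst; [left|right]; apply H; auto.
Qed.

Lemma R_anti x y : R x y -> R y x -> x = y.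
Proof.
  intros H1 H2. destruct (HR (fun z => z = x \/ z = y)) as [m [Hm [H Hu]]]. eauto.
  assert (x = m). { apply Hu. auto. intros z [->| ->]. apply R_refl. auto. }
  assert (y = m). { apply Hu. auto. intros z [->| ->]. auto. apply R_refl. }
  congruence.
Qed.

Lemma R_trans x y z : R x y -> R y z -> R x z.
Proof.
  intros H1 H2. destruct (HR (fun w => w = x \/ w = y \/ w = z)) as [m [Hm [H _]]]. eauto.
  destruct Hm as [->|[->| ->]].
  - auto.
  - assert (x = y) by (apply R_anti; auto). subst. auto.
  - assert (y = z) by (apply R_anti; auto). subst. auto.
Qed.

Definition W x y := rlt x y \/ (rle x y /\ rle y x /\ R x y /\ x <> y).

Lemma W_irrefl x : ~ W x x.
Proof. intros [H|[_ [_ [_ H]]]]. exact (rlt_irrefl x H). auto. Qed.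

Lemma W_trans x y z : W x y -> W y z -> W x z.
Proof.
  intros [H1|[H1 [H1' [H1r H1n]]]] [H2|[H2 [H2' [H2r H2n]]]].
  - left. eapply rlt_rle_trans; eauto using rlt_rle.
  - left. eapply rlt_rle_trans; eauto.
  - left. eapply rle_rlt_trans; eauto.
  - right. split. eauto using rle_trans. split. eauto using rle_trans. split. eauto using R_trans.
    intro E. subst z. apply H1n. apply R_anti; auto.
Qed.

Lemma W_total x y : x <> y -> W x y \/ W y x.
Proof.
  intro Hn. destruct (rle_total x y) as [H|H]; [|right; left; exact H].
  destruct (rle_total y x) as [H'|H']; [|left; left; exact H'].
  destruct (R_total x y) as [Hr|Hr]; [left|right]; right.
  - split. auto. split. auto. split. auto. auto.
  - split. auto. split. auto. split. auto. intro E. apply Hn. auto.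
Qed.

Lemma W_ext x y : qle x y -> ~ qle y x -> W x y.
Proof. intros. left. apply slt_rlt. split; auto. Qed.

Lemma W_min (P : Q -> Prop) : (exists x, P x) -> exists m, P m /\ forall y, P y -> m = y \/ W m y.
Proof.
  intro Hne. destruct (wf_min rlt rlt_wf P Hne) as [z0 [Pz0 Hz0]].
  destruct (HR (fun y => P y /\ rle y z0)) as [m [[Pm Hm] [Hlb _]]]. exists z0. split; auto using rle_refl.
  exists m. split. exact Pm. intros y Py.
  destruct (rle_total z0 y) as [Hzy|Hzy]; [|exfalso; exact (Hz0 y Py Hzy)].
  destruct (rle_total z0 m) as [Hzm|Hzm]; [|exfalso; exact (Hz0 m Pm Hzm)].
  destruct (rle_total y z0) as [Hyz|Hyz].
  - destruct (classic (m = y)) as [E|E]. left; exact E. right. right.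
    split. eauto using rle_trans. split. eauto using rle_trans. split. auto. auto.
  - right. left. eapply rle_rlt_trans; eauto.
Qed.

End Ranks.

Section Trees.
Context {Q : Type} (qle : Q -> Q -> Prop).
Hypothesis qrefl : forall x, qle x x.
Hypothesis qtrans : forall x y z, qle x y -> qle y z -> qle x z.

Definition tree_ind' (P : tree Q -> Prop)
  (HL : forall x, P (Leaf x))
  (HN : forall s ss, (forall u, In u (s :: ss) -> P u) -> P (Node s ss)) : forall t, P t :=
  fix IH (t : tree Q) : P t := match t with
  | Leaf x => HL x
  | Node s ss => HN s ss (fun u Hu => match Hu with
      | or_introl E => eq_rect s P (IH s) u E
      | or_intror H' => (fix F (l : list (tree Q)) : forall u, In u l -> P u := match l with
            | [] => fun u H => False_ind _ H
            | v :: l' => fun u H => match H with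
                 | or_introl E => eq_rect v P (IH v) u E
                 | or_intror H'' => F l' u H'' end end) ss u H' end)
  end.

Fixpoint height (t : tree Q) : nat :=
  match t with Leaf _ => 0 | Node s ss => S (list_max (map height (s :: ss))) end.

Lemma list_max_in n l : In n l -> n <= list_max l.
Proof.
  intro H. assert (A : list_max l <= list_max l) by lia. apply list_max_le in A.
  rewrite Forall_forall in A. auto.
Qed.

Lemma height_child u s ss : In u (s :: ss) -> height u < height (Node s ss).
Proof.
  intro H. change (height (Node s ss)) with (S (list_max (map height (s :: ss)))). apply le_n_S. apply list_max_in. apply in_map. exact H.
Qed.

Lemma tle_node_inv s ss u : tle qle (Node s ss) u -> exists t ts, u = Node t ts /\
  forall sg, In sg (s :: ss) -> exists tau, In tau (t :: ts) /\ tle qle sg tau.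
Proof. intro H. inversion H; subst. eauto. Qed.

Lemma tle_node_leaf s ss y : ~ tle qle (Node s ss) (Leaf y).
Proof. intro H. inversion H. Qed.

Inductive lf (y : Q) : tree Q -> Prop :=
| lf_leaf : lf y (Leaf y)
| lf_node : forall s ss u, In u (s :: ss) -> lf y u -> lf y (Node s ss).

Lemma leaf_tle x t : tle qle (Leaf x) t -> exists y, lf y t /\ qle x y.
Proof.
  intro H. remember (Leaf x) as a eqn:Ea. induction H; inversion Ea; subst.
  - exists y. split. constructor. auto.
  - destruct (IHtle eq_refl) as [y [Hy Hq]]. exists y. split. eapply lf_node; eauto. auto.
Qed.

Lemma tle_leaf x t y : lf y t -> qle x y -> tle qle (Leaf x) t.
Proof.
  intros H Hq. induction H.
  - constructor. auto.
  - eapply tle_leaf_node; eauto.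
Qed.

Lemma tle_leaves t : forall u, tle qle t u -> forall y, lf y t -> exists z, lf z u /\ qle y z.
Proof.
  induction t as [x|s ss IH] using tree_ind'; intros u H y Hy.
  - inversion Hy; subst. apply leaf_tle. exact H.
  - destruct (tle_node_inv _ _ _ H) as [t [ts [-> Hch]]].
    inversion Hy as [|s' ss' c Hc Hyc]; subst. destruct (Hch c Hc) as [tau [Ht Htau]].
    destruct (IH c Hc tau Htau y Hyc) as [z [Hz Hq]]. exists z. split. eapply lf_node; eauto. auto.
Qed.

Lemma tle_refl t : tle qle t t.
Proof.
  induction t as [x|s ss IH] using tree_ind'.
  - constructor. auto.
  - constructor. intros sg Hsg. exists sg. split. auto. auto.
Qed.

Lemma tle_trans a : forall b c, tle qle a b -> tle qle b c -> tle qle a c.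
Proof.
  induction a as [x|s ss IH] using tree_ind'; intros b c Hab Hbc.
  - destruct (leaf_tle _ _ Hab) as [y [Hy Hq]].
    destruct (tle_leaves _ _ Hbc y Hy) as [z [Hz Hq']]. eapply tle_leaf; eauto.
  - destruct (tle_node_inv _ _ _ Hab) as [t [ts [-> Hch]]].
    destruct (tle_node_inv _ _ _ Hbc) as [v [vs [-> Hch']]].
    constructor. intros sg Hsg. destruct (Hch sg Hsg) as [tau [Ht Htau]].
    destruct (Hch' tau Ht) as [w [Hw Hw']]. exists w. split. auto. eapply IH; eauto.
Qed.

Lemma tle_height t : forall u, tle qle t u -> height t <= height u.
Proof.
  induction t as [x|s ss IH] using tree_ind'; intros u H.
  - simpl. lia.
  - destruct (tle_node_inv _ _ _ H) as [t [ts [-> Hch]]].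
    change (S (list_max (map height (s :: ss))) <= S (list_max (map height (t :: ts)))). apply le_n_S.
    apply list_max_le. rewrite Forall_forall. intros k Hk. apply in_map_iff in Hk.
    destruct Hk as [sg [<- Hsg]]. destruct (Hch sg Hsg) as [tau [Ht Htau]].
    apply PeanoNat.Nat.le_trans with (height tau). apply IH; auto.
    apply list_max_in. apply in_map. exact Ht.
Qed.

End Trees.

Section Core.
Context {Q : Type} (qle : Q -> Q -> Prop).
Hypothesis qrefl : forall x, qle x x.
Hypothesis qtrans : forall x y z, qle x y -> qle y z -> qle x z.
Hypothesis qwqo : forall f : nat -> Q, exists i j, i < j /\ qle (f i) (f j).
Variable W : Q -> Q -> Prop.
Hypothesis W_irrefl : forall x, ~ W x x.
Hypothesis W_trans : forall x y z, W x y -> W y z -> W x z.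
Hypothesis W_total : forall x y, x <> y -> W x y \/ W y x.
Hypothesis W_ext : forall x y, qle x y -> ~ qle y x -> W x y.
Hypothesis W_min : forall P : Q -> Prop, (exists x, P x) -> exists m, P m /\ forall y, P y -> m = y \/ W m y.

Fixpoint kb_lt (l1 l2 : list Q) : Prop :=
  match l1, l2 with
  | [], _ => False
  | _ :: _, [] => True
  | a :: r1, b :: r2 => W a b \/ (a = b /\ kb_lt r1 r2)
  end.

Definition kb_le l1 l2 := kb_lt l1 l2 \/ l1 = l2.

Lemma kb_irrefl l : ~ kb_lt l l.
Proof. induction l as [|a l IH]; simpl. auto. intros [H|[_ H]]. apply (W_irrefl a H). auto. Qed.

Lemma kb_trans l1 : forall l2 l3, kb_lt l1 l2 -> kb_lt l2 l3 -> kb_lt l1 l3.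
Proof.
  induction l1 as [|a l1 IH]; intros [|b l2] [|c l3]; simpl; try tauto.
  intros [H1|[E1 H1]] [H2|[E2 H2]]; subst.
  - left; eauto.
  - left; auto.
  - left; auto.
  - right; split; eauto.
Qed.

Lemma kb_total l1 : forall l2, l1 <> l2 -> kb_lt l1 l2 \/ kb_lt l2 l1.
Proof.
  induction l1 as [|a l1 IH]; intros [|b l2] Hn; simpl; auto.
  destruct (classic (a = b)) as [E|E].
  + subst. assert (l1 <> l2) by congruence. destruct (IH l2 H); [left|right]; right; auto.
  + destruct (W_total a b E); [left|right]; left; auto.
Qed.

Lemma kb_le_trans l1 l2 l3 : kb_le l1 l2 -> kb_le l2 l3 -> kb_le l1 l3.
Proof. intros [H1|<-] [H2|<-]; unfold kb_le; eauto using kb_trans. Qed.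

Lemma kb_le_lt_trans l1 l2 l3 : kb_le l1 l2 -> kb_lt l2 l3 -> kb_lt l1 l3.
Proof. intros [H1|<-] H2; eauto using kb_trans. Qed.

Lemma kb_lt_le_trans l1 l2 l3 : kb_lt l1 l2 -> kb_le l2 l3 -> kb_lt l1 l3.
Proof. intros H1 [H2|<-]; eauto using kb_trans. Qed.

Lemma kb_prefix p r s : kb_lt (p ++ r) (p ++ s) <-> kb_lt r s.
Proof.
  induction p as [|a p IH]; simpl. tauto. rewrite IH. split.
  intros [H|[_ H]]. exfalso; exact (W_irrefl a H). exact H. intro H. right. auto.
Qed.

Definition isrep x := forall z, qle z x -> qle x z -> x = z \/ W x z.
Definition nqle a b := ~ qle a b.
Definition Good (l : list Q) := l <> [] /\ Forall isrep l /\ StronglySorted W l /\ StronglySorted nqle l.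

Lemma rep_qle a b : isrep a -> qle a b -> a = b \/ W a b.
Proof.
  intros Ha Hab. destruct (classic (qle b a)) as [Hba|Hba].
  - apply Ha; auto.
  - right. apply W_ext; auto.
Qed.

Lemma rep_contra a d : isrep a -> W d a -> qle a d -> False.
Proof.
  intros Ha Hda Had. destruct (rep_qle a d Ha Had) as [E|H].
  - subst. exact (W_irrefl _ Hda).
  - exact (W_irrefl _ (W_trans _ _ _ H Hda)).
Qed.

Lemma SS_app {R : Q -> Q -> Prop} l1 l2 : StronglySorted R (l1 ++ l2) ->
  forall x y, In x l1 -> In y l2 -> R x y.
Proof.
  induction l1 as [|a l1 IH]; simpl. tauto.
  intros H x y Hx Hy. apply StronglySorted_inv in H. destruct H as [H1 H2].
  destruct Hx as [<-|Hx]. rewrite Forall_forall in H2. apply H2. apply in_or_app; auto.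
  apply IH; auto.
Qed.

Lemma SS_cons {R : Q -> Q -> Prop} a l : StronglySorted R (a :: l) -> forall y, In y l -> R a y.
Proof. intros H y Hy. apply StronglySorted_inv in H. destruct H as [_ H]. rewrite Forall_forall in H. auto. Qed.


Fixpoint Tw (k : nat) (x : Q) : tree Q := match k with 0 => Leaf x | S k => Node (Tw k x) [] end.
Definition St x := Tw 3 x.
Definition Pr x y := Node (Leaf x) [Tw 1 y].
Definition En x0 xl := Node (Leaf xl) [Tw 3 x0].
Definition En1 x := Tw 5 x.
Fixpoint pairs (l : list Q) : list (tree Q) :=
  match l with
  | a :: ((b :: _) as r) => Pr a b :: pairs r
  | _ => []
  end.
Definition Eg (s0 : Q) (sr : list Q) := match sr with [] => En1 s0 | _ :: _ => En s0 (last sr s0) end.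
Definition enc (d : Q) (l : list Q) : tree Q :=
  match l with [] => Leaf d | a :: r => Node (St a) (pairs (a :: r) ++ [Eg a r]) end.

Lemma height_Tw k x : height (Tw k x) = k.
Proof. induction k; simpl; auto. rewrite IHk. lia. Qed.

Lemma lf_Tw k x z : lf z (Tw k x) -> z = x.
Proof.
  induction k; simpl; intro H; inversion H; subst; auto.
  destruct H2 as [<-|[]]. auto.
Qed.

Lemma lf_Tw_self k x : lf x (Tw k x).
Proof. induction k; simpl. constructor. eapply lf_node. left; reflexivity. auto. Qed.

Lemma leaves_only t u x y : tle qle t u -> lf x t -> (forall z, lf z u -> z = y) -> qle x y.
Proof.
  intros H Hx Hu. destruct (tle_leaves qle t u H x Hx) as [z [Hz Hq]].
  rewrite (Hu z Hz) in Hq. exact Hq.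
Qed.

Lemma Tw_Tw k l x y : tle qle (Tw k x) (Tw l y) -> qle x y.
Proof. intro H. eapply leaves_only; eauto using lf_Tw_self, lf_Tw. Qed.

Lemma In_pairs l h : In h (pairs l) -> exists c d, h = Pr c d /\ In c l /\ In d l.
Proof.
  induction l as [|a l IH]; simpl. tauto.
  destruct l as [|b l]. simpl. tauto.
  intros [<-|H]. exists a, b. simpl; auto.
  destruct (IH H) as [c [d [-> [Hc Hd]]]]. exists c, d. simpl in *; tauto.
Qed.

Lemma In_pairs_cons q l h : In h (pairs l) -> In h (pairs (q :: l)).
Proof. destruct l as [|x l]; simpl. tauto. intro H. right. exact H. Qed.

Lemma pairs_mid p0 p a r : In (Pr p a) (pairs (p0 ++ p :: a :: r)).
Proof.
  induction p0 as [|q p0 IH]; simpl. left; reflexivity.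
  apply In_pairs_cons. exact IH.
Qed.

Lemma pairs_cons_inv q l h : In h (pairs (q :: l)) -> (exists x l', l = x :: l' /\ h = Pr q x) \/ In h (pairs l).
Proof. destruct l as [|x l']; simpl. tauto. intros [<-|H]. left; eauto. right; exact H. Qed.

Lemma pairs_class p0 p b s h : In h (pairs (p0 ++ p :: b :: s)) ->
  h = Pr p b \/ (exists c d, h = Pr c d /\ In d (p0 ++ [p])) \/
  (exists c d, h = Pr c d /\ In c (b :: s) /\ In d (b :: s)).
Proof.
  induction p0 as [|q p0 IH].
  - intro H. change (pairs (p :: b :: s)) with (Pr p b :: pairs (b :: s)) in H.
    destruct H as [<-|H]. left; reflexivity. right; right. apply In_pairs. exact H.
  - intro H. change ((q :: p0) ++ p :: b :: s) with (q :: (p0 ++ p :: b :: s)) in H.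
    apply pairs_cons_inv in H. destruct H as [[x [l' [E ->]]]|H].
    + right; left. exists q, x. split. reflexivity. right.
      destruct p0 as [|y p0]; simpl in E; inversion E; subst; simpl; auto.
    + destruct (IH H) as [H1|[[c [d [-> Hd]]]|H1]]; auto.
      right; left. exists c, d. split. reflexivity. right; exact Hd.
Qed.

Lemma Pr_inj c d p b : Pr c d = Pr p b -> c = p /\ d = b.
Proof. unfold Pr. intro H. inversion H. auto. Qed.

Definition targets (s0 : Q) (sr : list Q) := St s0 :: pairs (s0 :: sr) ++ [Eg s0 sr].

Lemma targets_class s0 sr h : In h (targets s0 sr) ->
  h = St s0 \/ In h (pairs (s0 :: sr)) \/ h = Eg s0 sr.
Proof.
  unfold targets. simpl. intros [<-|H]. auto. apply in_app_or in H.
  destruct H as [H|[<-|[]]]; auto.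
Qed.

Lemma height_Pr x y : height (Pr x y) = 2.
Proof. reflexivity. Qed.

Lemma height_En x y : height (En x y) = 4.
Proof. reflexivity. Qed.

Lemma L_St x s0 sr h : In h (targets s0 sr) -> tle qle (St x) h -> qle x s0.
Proof.
  intros Hh H. destruct (targets_class _ _ _ Hh) as [->|[Hp| ->]].
  - apply (Tw_Tw 3 3). exact H.
  - destruct (In_pairs _ _ Hp) as [c [d [-> _]]]. apply (tle_height qle) in H. simpl in H. lia.
  - destruct sr as [|r sr]; simpl in H.
    + apply (Tw_Tw 3 5). exact H.
    + destruct (tle_node_inv qle _ _ _ H) as [t [ts [E Hch]]]. inversion E; subst.
      destruct (Hch (Tw 2 x) (or_introl eq_refl)) as [tau [Ht Htau]].
      destruct Ht as [<-|[<-|[]]]. exfalso; eapply tle_node_leaf; eauto. apply (Tw_Tw 2 3). exact Htau.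
Qed.

Lemma L_Pr x y s0 sr h : In h (targets s0 sr) -> tle qle (Pr x y) h ->
  qle y s0 \/ (exists c d, In (Pr c d) (pairs (s0 :: sr)) /\ qle y d /\ (qle x c \/ qle x d)).
Proof.
  intros Hh H. destruct (targets_class _ _ _ Hh) as [->|[Hp| ->]].
  - left. eapply leaves_only; eauto. eapply lf_node. right; left; reflexivity. apply lf_Tw_self.
    apply lf_Tw.
  - right. destruct (In_pairs _ _ Hp) as [c [d [-> _]]]. exists c, d. split. exact Hp.
    destruct (tle_node_inv qle _ _ _ H) as [t [ts [E Hch]]]. inversion E; subst.
    destruct (Hch (Tw 1 y) (or_intror (or_introl eq_refl))) as [tau [Ht Htau]].
    destruct (Hch (Leaf x) (or_introl eq_refl)) as [tau' [Ht' Htau']].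
    split.
    + destruct Ht as [<-|[<-|[]]]. exfalso; eapply tle_node_leaf; eauto. apply (Tw_Tw 1 1). exact Htau.
    + destruct Ht' as [<-|[<-|[]]].
      * left. inversion Htau'; auto.
      * right. apply (Tw_Tw 0 1). exact Htau'.
  - left. destruct sr as [|r sr]; simpl in H.
    + eapply leaves_only; eauto. eapply lf_node. right; left; reflexivity. apply lf_Tw_self. apply lf_Tw.
    + destruct (tle_node_inv qle _ _ _ H) as [t [ts [E Hch]]]. inversion E; subst.
      destruct (Hch (Tw 1 y) (or_intror (or_introl eq_refl))) as [tau [Ht Htau]].
      destruct Ht as [<-|[<-|[]]]. exfalso; eapply tle_node_leaf; eauto. apply (Tw_Tw 1 3). exact Htau.
Qed.

Lemma L_En x0 xl s0 sr h : sr <> [] -> In h (targets s0 sr) -> tle qle (En x0 xl) h ->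
  qle xl (last sr s0) \/ qle xl s0.
Proof.
  intros Hsr Hh H. destruct (targets_class _ _ _ Hh) as [->|[Hp| ->]].
  - apply (tle_height qle) in H. simpl in H. lia.
  - destruct (In_pairs _ _ Hp) as [c [d [-> _]]]. apply (tle_height qle) in H. simpl in H. lia.
  - destruct sr as [|r sr]. congruence. simpl Eg in H.
    destruct (tle_node_inv qle _ _ _ H) as [t [ts [E Hch]]]. inversion E; subst.
    destruct (Hch (Leaf xl) (or_introl eq_refl)) as [tau [Ht Htau]].
    destruct Ht as [<-|[<-|[]]].
    + left. inversion Htau; auto.
    + right. apply (Tw_Tw 0 3). exact Htau.
Qed.

Lemma L_En1 x s0 sr h : sr <> [] -> In h (targets s0 sr) -> ~ tle qle (En1 x) h.
Proof.
  intros Hsr Hh H. apply (tle_height qle) in H. unfold En1 in H. rewrite height_Tw in H.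
  destruct (targets_class _ _ _ Hh) as [->|[Hp| ->]].
  - unfold St in H. rewrite height_Tw in H. lia.
  - destruct (In_pairs _ _ Hp) as [c [d [-> _]]]. simpl in H. lia.
  - destruct sr as [|r sr]. congruence. simpl in H. lia.
Qed.

Lemma first_diff (r1 r2 : list Q) : exists p r s, r1 = p ++ r /\ r2 = p ++ s /\
  (r = [] \/ s = [] \/ exists a r' b s', r = a :: r' /\ s = b :: s' /\ a <> b).
Proof.
  revert r2. induction r1 as [|a r1 IH]; intro r2.
  - exists [], [], r2. auto.
  - destruct r2 as [|b r2]. exists [], (a :: r1), []. auto.
    destruct (classic (a = b)) as [<-|E].
    + destruct (IH r2) as [p [r [s [-> [-> Hc]]]]]. exists (a :: p), r, s. auto.
    + exists [], (a :: r1), (b :: r2). split. auto. split. auto. right; right. eauto 7.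
Qed.

Lemma enc_children d r0 rr s0 sr : tle qle (enc d (r0 :: rr)) (enc d (s0 :: sr)) ->
  forall g, In g (targets r0 rr) -> exists h, In h (targets s0 sr) /\ tle qle g h.
Proof.
  intro H. simpl in H. destruct (tle_node_inv qle _ _ _ H) as [t [ts [E Hch]]].
  inversion E; subst. exact Hch.
Qed.

Lemma last_In_cons (l : list Q) x : In (last l x) (x :: l).
Proof.
  induction l as [|y l IH]. simpl; auto.
  destruct l as [|z l]. simpl; auto.
  change (last (y :: z :: l) x) with (last (z :: l) x).
  destruct IH as [E|H]. left; exact E. right; right; exact H.
Qed.

Lemma last_cons_ne (l : list Q) x d : l <> [] -> last (x :: l) d = last l d.
Proof. destruct l. congruence. reflexivity. Qed.

Lemma last_In_ne (l : list Q) d : l <> [] -> In (last l d) l.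
Proof.
  induction l as [|y l IH]; intro Hn. congruence.
  destruct l as [|z l]. simpl; auto.
  change (last (y :: z :: l) d) with (last (z :: l) d). right. apply IH. congruence.
Qed.

Lemma last_app_ne (l m : list Q) d : m <> [] -> last (l ++ m) d = last m d.
Proof.
  intro Hm. induction l as [|x l IH]. reflexivity.
  change ((x :: l) ++ m) with (x :: (l ++ m)). rewrite last_cons_ne. exact IH.
  destruct l; destruct m; simpl; congruence.
Qed.

Lemma head_in_prefix x (l p m : list Q) : x :: l = p ++ m -> p <> [] -> In x p.
Proof. destruct p as [|y p]. congruence. simpl. intros E _. inversion E. auto. Qed.

Lemma reflection d r1 r2 : Good r1 -> Good r2 -> tle qle (enc d r1) (enc d r2) -> kb_le r1 r2.
Proof.
  intros G1 G2 H.
  destruct G1 as [N1 [Rep1 [SW1 SN1]]]. destruct G2 as [N2 [Rep2 [SW2 SN2]]].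
  destruct (first_diff r1 r2) as [p [r [s [Er [Es Hc]]]]].
  destruct Hc as [-> | [-> | [a [r' [b [s' [-> [-> Hab]]]]]]]].
  - destruct s as [|b s'].
    + right. subst. reflexivity.
    + exfalso. rewrite app_nil_r in Er. subst r1.
      destruct p as [|r0 rr]. congruence.
      subst r2. change ((r0 :: rr) ++ b :: s') with (r0 :: (rr ++ b :: s')) in H.
      assert (Hne : rr ++ b :: s' <> []) by (destruct rr; simpl; congruence).
      destruct (enc_children d r0 rr r0 (rr ++ b :: s') H (Eg r0 rr)) as [h [Hh Hgh]].
      { unfold targets. right. apply in_or_app. right. left. reflexivity. }
      destruct rr as [|r1 rr'].
      * exact (L_En1 r0 r0 _ h Hne Hh Hgh).
      * simpl Eg in Hgh. destruct (L_En _ _ _ _ h Hne Hh Hgh) as [Hq|Hq].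
        -- rewrite last_app_ne in Hq by congruence.
           apply (SS_app (R := nqle) (r0 :: r1 :: rr') (b :: s') SN2 (last (r1 :: rr') r0) (last (b :: s') r0)).
           apply last_In_cons. apply last_In_ne. congruence. exact Hq.
        -- assert (Hin : In (last (r1 :: rr') r0) (r1 :: rr')) by (apply last_In_ne; congruence).
           apply (rep_contra (last (r1 :: rr') r0) r0).
           rewrite Forall_forall in Rep1. apply Rep1. right. exact Hin.
           apply (SS_cons (R := W) r0 (r1 :: rr')). exact SW1. exact Hin. exact Hq.
  - destruct r as [|a r'].
    + right. subst. reflexivity.
    + left. subst. apply (proj2 (kb_prefix p (a :: r') [])). simpl. exact I.
  - left. subst r1 r2. apply (proj2 (kb_prefix p (a :: r') (b :: s'))). simpl. left.
    assert (Ha : isrep a) by (rewrite Forall_forall in Rep1; apply Rep1; apply in_or_app; right; left; reflexivity).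
    assert (Hcontra : forall x, In x p -> qle a x -> False).
    { intros x Hx Hq. apply (rep_contra a x Ha). apply (SS_app (R := W) p (a :: r') SW1); simpl; auto. exact Hq. }
    enough (Hq : qle a b) by (destruct (rep_qle a b Ha Hq); [contradiction|assumption]).
    destruct (p ++ a :: r') as [|r0 rr] eqn:E1. destruct p; simpl in E1; congruence.
    destruct (p ++ b :: s') as [|s0 sr] eqn:E2. destruct p; simpl in E2; congruence.
    destruct p as [|p0 p'] eqn:Ep.
    + simpl in E1, E2. injection E1 as Ea Er. injection E2 as Eb Es. subst r0 rr s0 sr.
      destruct (enc_children d a r' b s' H (St a)) as [h [Hh Hgh]]. left; reflexivity.
      exact (L_St a b s' h Hh Hgh).
    + rewrite <- Ep in *. assert (Hpne : p <> []) by (subst p; congruence).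
      destruct (exists_last Hpne) as [p1 [q Hp1]].
      assert (Hg : In (Pr q a) (targets r0 rr)).
      { unfold targets. right. apply in_or_app. left. rewrite <- E1. rewrite Hp1.
        rewrite <- app_assoc. simpl. apply pairs_mid. }
      destruct (enc_children d r0 rr s0 sr H (Pr q a) Hg) as [h [Hh Hgh]].
      destruct (L_Pr q a s0 sr h Hh Hgh) as [Hq|[c [d' [Hcd [Hq1 Hq2]]]]].
      * exfalso. apply (Hcontra s0). apply (head_in_prefix s0 sr p (b :: s')). symmetry; exact E2. exact Hpne. exact Hq.
      * rewrite <- E2 in Hcd. rewrite Hp1 in Hcd. rewrite <- app_assoc in Hcd. simpl in Hcd.
        destruct (pairs_class p1 q b s' _ Hcd) as [Hc|[[c2 [d2 [Hc Hd2]]]|[c2 [d2 [Hc [Hc2 Hd2]]]]]].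
        -- apply Pr_inj in Hc. destruct Hc as [_ ->]. exact Hq1.
        -- apply Pr_inj in Hc. destruct Hc as [_ ->]. exfalso. apply (Hcontra d2).
           rewrite Hp1. exact Hd2. exact Hq1.
        -- apply Pr_inj in Hc. destruct Hc as [-> ->]. exfalso.
           assert (Hqp : In q p) by (rewrite Hp1; apply in_or_app; right; left; reflexivity).
           destruct Hq2 as [Hq2|Hq2].
           ++ rewrite <- E2 in SN2. exact (SS_app (R := nqle) p (b :: s') SN2 q c2 Hqp Hc2 Hq2).
           ++ rewrite <- E2 in SN2. exact (SS_app (R := nqle) p (b :: s') SN2 q d2 Hqp Hd2 Hq2).
Qed.

Fixpoint spec (U : Q -> Prop) (p : list Q) (l : list Q) {struct l} : Prop :=
  match l with
  | [] => forall y, U y -> exists x, In x p /\ qle x y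
  | a :: r => U a /\ (forall x, In x p -> ~ qle x a) /\
      (forall y, U y -> (forall x, In x p -> ~ qle x y) -> a = y \/ W a y) /\ spec U (p ++ [a]) r
  end.

Definition ext (U : Q -> Prop) (p' p : list Q) := exists a, p' = p ++ [a] /\ U a /\ forall x, In x p -> ~ qle x a.

Lemma ext_acc U p : Acc (ext U) p.
Proof.
  apply NNPP. intro Hn. destruct (not_acc_chain (ext U) p Hn) as [f [_ Hf]].
  pose (g := fun n => proj1_sig (constructive_indefinite_description _ (Hf n))).
  assert (Hg : forall n, f (S n) = f n ++ [g n] /\ U (g n) /\ forall x, In x (f n) -> ~ qle x (g n)).
  { intro n. exact (proj2_sig (constructive_indefinite_description _ (Hf n))). }
  assert (Hmono : forall i k x, In x (f i) -> In x (f (k + i))).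
  { intros i k x Hx. induction k as [|k IH]. exact Hx. simpl. rewrite (proj1 (Hg (k + i))).
    apply in_or_app. left. exact IH. }
  destruct (qwqo g) as [i [j [Hij Hq]]].
  assert (Hin : In (g i) (f j)).
  { replace j with ((j - S i) + S i) by lia. apply Hmono. rewrite (proj1 (Hg i)).
    apply in_or_app. right. left. reflexivity. }
  exact (proj2 (proj2 (Hg j)) (g i) Hin Hq).
Qed.

Lemma spec_exists U p : exists l, spec U p l.
Proof.
  induction (ext_acc U p) as [p _ IH].
  destruct (classic (forall y, U y -> exists x, In x p /\ qle x y)) as [H|H].
  - exists []. exact H.
  - assert (Hex : exists y, U y /\ forall x, In x p -> ~ qle x y).
    { apply NNPP. intro C. apply H. intros y Uy. apply NNPP. intro C2. apply C. exists y. split. auto.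
      intros x Hx Hq. apply C2. eauto. }
    destruct (W_min _ Hex) as [m [[Um Hm] Hmin]].
    destruct (IH (p ++ [m])) as [l Hl]. exists m. auto.
    exists (m :: l). simpl. split. auto. split. auto. split. intros y Uy Hy. apply Hmin. auto. exact Hl.
Qed.

Lemma spec_compare l1 : forall p l2 (U V : Q -> Prop), (forall z, V z -> U z) ->
  spec U p l1 -> spec V p l2 -> kb_le l1 l2.
Proof.
  induction l1 as [|a r IH]; intros p [|b r'] U V HVU H1 H2.
  - right. reflexivity.
  - exfalso. simpl in H1, H2. destruct H2 as [Vb [Hb _]]. destruct (H1 b (HVU b Vb)) as [x [Hx Hq]].
    exact (Hb x Hx Hq).
  - left. simpl. exact I.
  - simpl in H1, H2. destruct H1 as [Ua [Ha [Hmin H1]]]. destruct H2 as [Vb [Hb [_ H2]]].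
    destruct (Hmin b (HVU b Vb) Hb) as [<-|Hw].
    + destruct (IH (p ++ [a]) r' U V HVU H1 H2) as [Hl|<-].
      * left. simpl. right. auto.
      * right. reflexivity.
    + left. simpl. left. exact Hw.
Qed.

Lemma spec_up U (Hup : forall y z, U y -> qle y z -> U z) l : forall p, spec U p l ->
  (forall x, In x p -> U x) -> forall z, U z <-> exists s, In s (p ++ l) /\ qle s z.
Proof.
  induction l as [|a r IH]; intros p H Hp z.
  - rewrite app_nil_r. split. apply H. intros [s [Hs Hq]]. eapply Hup; eauto.
  - simpl in H. destruct H as [Ua [_ [_ H]]].
    replace (p ++ a :: r) with ((p ++ [a]) ++ r) by (rewrite <- app_assoc; reflexivity).
    apply IH. exact H. intros x Hx. apply in_app_or in Hx. destruct Hx as [Hx|[<-|[]]]; auto.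
Qed.

Lemma spec_good U (Hup : forall y z, U y -> qle y z -> U z) l : forall p, spec U p l ->
  Forall isrep l /\ StronglySorted W l /\ StronglySorted nqle l /\
  forall s, In s l -> U s /\ forall x, In x p -> ~ qle x s.
Proof.
  induction l as [|a r IH]; intros p H.
  - split. constructor. split. constructor. split. constructor. simpl; tauto.
  - simpl in H. destruct H as [Ua [Ha [Hmin H]]].
    destruct (IH _ H) as [Rr [SWr [SNr Hin]]].
    split; [|split; [|split]].
    + constructor; auto. intros z Hza Haz. apply Hmin. eapply Hup; eauto.
      intros x Hx Hxz. apply (Ha x Hx). eauto.
    + constructor. auto. rewrite Forall_forall. intros s Hs. destruct (Hin s Hs) as [Us Hs'].
      destruct (Hmin s Us) as [<-|Hw]. intros x Hx. apply Hs'. apply in_or_app. auto.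
      exfalso. apply (Hs' a). apply in_or_app. right; left; reflexivity. apply qrefl. exact Hw.
    + constructor. auto. rewrite Forall_forall. intros s Hs. destruct (Hin s Hs) as [_ Hs'].
      apply Hs'. apply in_or_app. right; left; reflexivity.
    + intros s [<-|Hs]. auto. destruct (Hin s Hs) as [Us Hs']. split. auto.
      intros x Hx. apply Hs'. apply in_or_app. auto.
Qed.

Variable d : Q.

Definition kap (t : tree Q) := forall l, Good l -> ~ tle qle t (enc d l).
Definition Iset (t : tree Q) (r : list Q) := exists l, Good l /\ tle qle (enc d l) t /\ kb_le r l.
Definition Lin (t u : tree Q) := kap u \/ (~ kap t /\ forall r, Iset t r -> Iset u r).

Lemma kap_mono t u : tle qle t u -> kap t -> kap u.
Proof. intros H Ht l Gl Hu. apply (Ht l Gl). eapply tle_trans; eauto. Qed.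

Lemma Lin_lin : linearization (tle qle) Lin.
Proof.
  split; [split|split].
  - intro t. destruct (classic (kap t)). left; auto. right; auto.
  - intros t u v H1 [H2|[H2 H2']]. left; auto. right. destruct H1 as [H1|[H1 H1']]. contradiction.
    split. auto. auto.
  - intros t u. destruct (classic (kap u)) as [Hu|Hu]. left; left; auto.
    destruct (classic (kap t)) as [Ht|Ht]. right; left; auto.
    destruct (classic (forall r, Iset t r -> Iset u r)) as [Hi|Hi]. left; right; auto.
    right; right. split. auto. intros r' Hr'.
    apply NNPP. intro C. apply Hi. intros r Hr.
    destruct Hr as [l [Gl [Hl Hrl]]]. destruct Hr' as [l' [Gl' [Hl' Hrl']]].
    destruct (classic (r = r')) as [E|E]. subst. exfalso. apply C. exists l. auto.
    destruct (kb_total r r' E) as [Hlt|Hlt].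
    + exists l'. split. auto. split. auto. eapply kb_le_trans. left; exact Hlt. exact Hrl'.
    + exfalso. apply C. exists l. split. auto. split. auto. eapply kb_le_trans. left; exact Hlt. exact Hrl.
  - intros t u H. destruct (classic (kap u)) as [Hu|Hu]. left; auto. right. split.
    intro Ht. apply Hu. eapply kap_mono; eauto.
    intros r [l [Gl [Hl Hrl]]]. exists l. split. auto. split. eapply tle_trans; eauto. auto.
Qed.

Lemma Iset_enc l r : Good l -> (Iset (enc d l) r <-> kb_le r l).
Proof.
  intro Gl. split.
  - intros [l' [Gl' [H Hr]]]. eapply kb_le_trans. exact Hr. eapply reflection; eauto.
  - intro H. exists l. split. auto. split. apply tle_refl. auto. auto.
Qed.

Lemma not_kap_enc l : Good l -> ~ kap (enc d l).
Proof. intros Gl H. apply (H l Gl). apply tle_refl. auto. Qed.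

Lemma Lin_strict l1 l2 : Good l1 -> Good l2 -> kb_lt l1 l2 -> strict Lin (enc d l1) (enc d l2).
Proof.
  intros G1 G2 H. split.
  - right. split. apply not_kap_enc; auto. intros r Hr.
    apply Iset_enc; auto. apply Iset_enc in Hr; auto. left. eapply kb_le_lt_trans; eauto.
  - intros [H'|[_ H']]. exact (not_kap_enc l1 G1 H').
    assert (Hi : Iset (enc d l2) l2) by (apply Iset_enc; auto; right; auto).
    apply H' in Hi. apply Iset_enc in Hi; auto.
    apply (kb_irrefl l1). eapply kb_lt_le_trans; eauto.
Qed.

Lemma height_enc l : height (enc d l) <= 6.
Proof.
  destruct l as [|a r]. simpl. lia.
  change (S (list_max (map height (St a :: pairs (a :: r) ++ [Eg a r]))) <= 6).
  apply le_n_S. apply list_max_le. rewrite Forall_forall. intros k Hk. apply in_map_iff in Hk.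
  destruct Hk as [g [<- Hg]]. destruct (targets_class a r g Hg) as [->|[Hp| ->]].
  - unfold St. rewrite height_Tw. lia.
  - destruct (In_pairs _ _ Hp) as [c [e [-> _]]]. simpl. lia.
  - destruct r; simpl; lia.
Qed.

Lemma kap_top : kap (Tw 7 d).
Proof.
  intros l Gl H. apply (tle_height qle) in H. rewrite height_Tw in H. pose proof (height_enc l). lia.
Qed.

Theorem core : o_lt qle (tle qle).
Proof.
  exists Lin, (Tw 7 d). split. exact Lin_lin.
  intros M [[Mrefl Mtrans] [Mtot Mext]].
  pose (U := fun x z => M x z).
  assert (Hup : forall x y z, U x y -> qle y z -> U x z).
  { intros x y z H1 H2. unfold U in *. eauto. }
  pose (sx := fun x => proj1_sig (constructive_indefinite_description _ (spec_exists (U x) []))).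
  assert (Hsx : forall x, spec (U x) [] (sx x)).
  { intro x. exact (proj2_sig (constructive_indefinite_description _ (spec_exists (U x) []))). }
  assert (Hgood : forall x, Good (sx x)).
  { intro x. destruct (spec_good (U x) (Hup x) (sx x) [] (Hsx x)) as [A [B [C _]]].
    split. intro E. pose proof (Hsx x) as Hs. rewrite E in Hs. simpl in Hs.
    destruct (Hs x (Mrefl x)) as [y [[] _]]. auto. }
  exists (fun x => enc d (sx x)). split.
  - intros x y [Hxy Hyx]. apply Lin_strict; auto.
    destruct (spec_compare (sx x) [] (sx y) (U x) (U y)) as [Hl|E]; auto.
    + intros z Hz. unfold U in *. eauto.
    + exfalso. apply Hyx.
      assert (A := spec_up (U x) (Hup x) (sx x) [] (Hsx x) (fun _ H => False_ind _ H) x).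
      assert (B := spec_up (U y) (Hup y) (sx y) [] (Hsx y) (fun _ H => False_ind _ H) x).
      apply B. rewrite <- E. apply A. apply Mrefl.
  - intro x. split.
    + left. exact kap_top.
    + intros [H|[H _]]. exact (not_kap_enc _ (Hgood x) H). exact (H kap_top).
Qed.

End Core.

Theorem proposition3p14 (Q : Type) (qle : Q -> Q -> Prop) :
  wqo qle -> inhabited Q -> o_lt qle (tle qle).
Proof.
  intros [[qr qt] qw] [d].
  destruct (WO.wo_min Q) as [R HR].
  refine (core qle qr qt qw (W qle R) _ _ _ _ _ d).
  - intro x. eapply W_irrefl; eauto.
  - intros x y z. eapply W_trans; eauto.
  - intros x y. eapply W_total; eauto.
  - intros x y. eapply W_ext; eauto.
  - intros P. eapply W_min; eauto.
Qed.
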